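(* Consider any instance of the large-market envy-free pricing problem described in the context with monotone hazard rate inverse demands and uniform peak $\lambda_i(0)=\lambda^{max}$, and a run of the ascending-price procedure with some stop parameter $k\ge1$. If an item $t$ belongs to the active set at two active prices $p_1<p_2$, then $c_t(y_t(p_1))\ge c_t(y_t(p_2))$, where $y_t(p)$ denotes the allocation of $t$ when the active price is $p$.
   Context: Model. Finite item set $S$, finite set $B$ of buyer types, bipartite graph $G=(B\cup S,E)$, $S_i=\{t:(i,t)\in E\}$. Buyer type $i$ has inverse demand $\lambda_i:[0,T_i]\to\mathbb{R}_{\ge0}$, non-increasing, continuously differentiable on $(0,T_i)$, with monotone hazard rate ($\lambda_i'/\lambda_i$ non-increasing), $\lambda_i(0)=\lambda^{max}$. Item $t$ has convex continuously differentiable production cost $C_t$ with derivative $c_t$. Allocations $y_t(i)\ge0$ ($>0$ only if $(i,t)\in E$), $\sum_ty_t(i)=x_i$, $y_t=\sum_iy_t(i)$. Best-response demand of type $i$ at price $q$: $\lambda_i(x_i)=q$. Min-cost flow for demand $\vec x$: feasible allocation minimizing $\sum_tC_t(y_t)$. $(\vec x^*,\vec y^* )$ a welfare maximizer (of $\sum_i\int_0^{x_i}\lambda_i-\sum_tC_t(y_t)$), $p^*_t=c_t(y^*_t)$. Ascending-price procedure with parameter $k\ge1$: start with $p_t=p^*_t$; ACTIVE = minimum-price items of $\vec p^*$ and buyer types receiving them in $\vec y^*$, rest INACTIVE, FINISH empty. Active items share an active price increased continuously; at active price $p$ active buyer types have best-response demand to $p$ and receive a min-cost flow within the subinstance induced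 by the active set; inactive entities keep their $\vec x^*,\vec y^*$ values, finished ones keep their values at finishing; $\vec y(p)$ is the resulting allocation. An inactive item $t$ (with the buyer types using it) becomes active when the active price reaches $p^*_t$. An active item $t$ (with buyer types using it) is finished and its price frozen once $p-c_t(y_t(p))\ge\frac1k(\lambda^{max}-c_t(y_t(p)))$. Ends when all are finished. *)

(* Defs.v *)
From HB Require Import structures.
From mathcomp Require Import all_boot all_order all_algebra.
From mathcomp Require Import all_classical all_reals all_analysis.
Set Implicit Arguments. Unset Strict Implicit. Unset Printing Implicit Defensive.
Import Order.TTheory GRing.Theory Num.Theory.
Import numFieldNormedType.Exports.
Local Open Scope classical_set_scope.
Local Open Scope ring_scope.

Section Model.
Context {R : realType} {B S : finType}.
(* B : buyer types, S : items, adj i t : (i,t) is an edge of G. *)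

Definition inv_demand_ok (lmax T : R) (lam : R -> R) : Prop :=
  0 < T /\ lam 0 = lmax /\
  (forall u, 0 <= u <= T -> 0 <= lam u) /\
  (forall u v, 0 <= u -> u <= v -> v <= T -> lam v <= lam u) /\
  (forall u, 0 < u < T ->
     derivable lam u 1 /\ ((derive1 lam) x @[x --> u] --> (derive1 lam) u)) /\
  (forall u v, 0 < u -> u <= v -> v < T -> 0 < lam v ->
     (derive1 lam) v / lam v <= (derive1 lam) u / lam u).

Definition cost_ok (C c : R -> R) : Prop :=
  (forall a b th, 0 <= a -> 0 <= b -> 0 <= th <= 1 ->
     C (th * a + (1 - th) * b) <= th * C a + (1 - th) * C b) /\
  (forall u : R, 0 < u -> is_derive u (1 : R) C (c u)) /\
  ((fun h => (C h - C 0) / h) x @[x --> 0^'+] --> c 0) /\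
  {within [set u : R | 0 <= u], continuous c}.

(* allocations y t i = y_t(i) *)
Definition load (y : S -> B -> R) (t : S) : R := \sum_i y t i.
Definition demand (y : S -> B -> R) (i : B) : R := \sum_t y t i.

Definition feasible (adj : B -> S -> bool) (T : B -> R) (y : S -> B -> R) :=
  (forall t i, 0 <= y t i) /\ (forall t i, 0 < y t i -> adj i t) /\
  (forall i, demand y i <= T i).

Definition welfare (lam : B -> R -> R) (C : S -> R -> R) (y : S -> B -> R) : R :=
  \sum_i (\int[lebesgue_measure]_(u in `[0, demand y i]) lam i u)
  - \sum_t C t (load y t).

Definition welfare_max adj T lam C (ys : S -> B -> R) :=
  feasible adj T ys /\
  forall y, feasible adj T y -> welfare lam C y <= welfare lam C ys.

Definition start_price (c : S -> R -> R) (ys : S -> B -> R) (t : S) : R :=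
  c t (load ys t).

(* ---- a run of the ascending-price procedure ----
   fin t : the active price at which item t is finished.
   y p   : the allocation when the active price is p. *)

Definition run_dom (ps fin : S -> R) (p : R) :=
  (exists t, ps t <= p) /\ (exists t, p <= fin t).

Definition item_active (ps fin : S -> R) (p : R) (t : S) := ps t <= p <= fin t.

Definition buyer_finished (fin : S -> R) (y : R -> S -> B -> R) (p : R) (i : B) :=
  exists t, fin t < p /\ 0 < y (fin t) t i.

Definition buyer_active (ys : S -> B -> R) (ps fin : S -> R)
    (y : R -> S -> B -> R) (p : R) (i : B) :=
  ~ buyer_finished fin y p i /\ exists t, 0 < ys t i /\ ps t <= p.

Definition fin_cond (lmax k : R) (ct : R -> R) (p yt : R) :=
  (lmax - ct yt) / k <= p - ct yt.

Definition ascending_run adj (T : B -> R) (lam : B -> R -> R) (lmax : R)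
    (C c : S -> R -> R) (k : R) (ys : S -> B -> R) (fin : S -> R)
    (y : R -> S -> B -> R) : Prop :=
  let ps := start_price c ys in
  let dom := run_dom ps fin in
  let actS := item_active ps fin in
  let actB := buyer_active ys ps fin y in
  (forall t, ps t <= fin t) /\
  (forall t, fin_cond lmax k (c t) (fin t) (load (y (fin t)) t)) /\
  (forall t q, ps t <= q -> q < fin t -> ~ fin_cond lmax k (c t) q (load (y q) t)) /\
  (forall p, dom p -> feasible adj T (y p)) /\
  (forall p i, dom p -> actB p i -> lam i (demand (y p) i) = p) /\
  (* min-cost flow within the active subinstance *)
  (forall p, dom p -> forall z, feasible adj T z ->
     (forall t i, ~ (actS p t /\ actB p i) -> z t i = y p t i) ->
     (forall i, actB p i -> demand z i = demand (y p) i) ->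
     \sum_t C t (load (y p) t) <= \sum_t C t (load z t)) /\
  (forall p t i, dom p -> p < ps t -> y p t i = ys t i) /\
  (forall p t i, dom p -> ~ actB p i -> ~ buyer_finished fin y p i ->
     y p t i = ys t i) /\
  (forall p q t i, dom p -> dom q -> p <= q ->
     (forall r, p < r <= q -> ~ actS r t) -> y q t i = y p t i) /\
  (forall p q t i, dom p -> dom q -> p <= q ->
     (forall r, p < r <= q -> ~ actB r i) -> y q t i = y p t i).

End Model.

(* Main.v *)
Require Import Defs.
From HB Require Import structures.
From mathcomp Require Import all_boot all_order all_algebra.
From mathcomp Require Import all_classical all_reals all_analysis.
From mathcomp Require Import ring lra.
Import Order.TTheory GRing.Theory Num.Theory.
Import numFieldNormedType.Exports.
Set Implicit Arguments. Unset Strict Implicit. Unset Printing Implicit Defensive.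
Local Open Scope classical_set_scope.
Local Open Scope ring_scope.

Lemma dn_right {R : realType} (f : R -> R) (l : R) :
  f x @[x --> 0^'] --> l -> f x @[x --> 0^'+] --> l.
Proof.
move=> H; apply: cvg_trans H.
move=> A [e e0 He]; exists e => // y /= H1 H2; apply: He => //.
by rewrite gt_eqF.
Qed.

Lemma dn_left {R : realType} (f : R -> R) (l : R) :
  f x @[x --> 0^'] --> l -> f x @[x --> 0^'-] --> l.
Proof.
move=> H; apply: cvg_trans H.
move=> A [e e0 He]; exists e => // y /= H1 H2; apply: He => //.
by rewrite lt_eqF.
Qed.

Lemma rq {R : realType} (C c : R -> R) a : cost_ok C c -> 0 <= a ->
  (fun h => (C (a + h) - C a) / h) x @[x --> 0^'+] --> c a.
Proof.
move=> [_ [Hd [H0 _]]]; rewrite le_eqVlt => /orP[/eqP <-|a0].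
  by under eq_fun do rewrite add0r.
have [dv dval] := Hd a a0.
apply: dn_right.
have -> : (fun h => (C (a + h) - C a) / h) =
  (fun h => h^-1 *: ((C \o shift a) (h *: 1) - C a)).
  by apply/funext => h /=; rewrite [h%:A]mulr1 (addrC h) mulrC.
by rewrite -dval.
Qed.

Lemma lq {R : realType} (C c : R -> R) a : cost_ok C c -> 0 < a ->
  (fun h => (C a - C (a - h)) / h) x @[x --> 0^'+] --> c a.
Proof.
move=> [_ [Hd _]] a0.
have [dv dval] := Hd a a0.
have dv' : (fun h => h^-1 *: ((C \o shift a) (h *: 1) - C a)) x @[x --> 0^'] --> c a.
  by rewrite -dval.
have H := dn_left dv'.
move/cvg_at_leftNP: H; rewrite oppr0.
have -> : (fun h => (C a - C (a - h)) / h) =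
  ((fun h => h^-1 *: ((C \o shift a) (h *: 1) - C a)) \o -%R).
  apply/funext => h /=; rewrite [(-h)%:A]mulr1 (addrC (-h)).
  by rewrite invrN scaleNr -scalerN opprB mulrC.
by [].
Qed.

Lemma cmp_lim {R : realType} (f g : R -> R) (l1 l2 d : R) :
  f x @[x --> 0^'+] --> l1 -> g x @[x --> 0^'+] --> l2 -> 0 < d ->
  (forall e, 0 < e -> e <= d -> f e <= g e) -> l1 <= l2.
Proof.
move=> Hf Hg d0 H; apply: (ler_cvg_to Hf Hg).
near=> e; apply: H.
  by near: e; exact: nbhs_right_gt.
by near: e; exact: nbhs_right_le.
Unshelve. all: end_near.
Qed.

Lemma shift_le {R : realType} (C0 c0 C1 c1 : R -> R) L0 L1 d :
  cost_ok C0 c0 -> cost_ok C1 c1 -> 0 < L0 -> 0 <= L1 -> 0 < d ->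
  (forall e, 0 < e -> e <= d -> C0 L0 + C1 L1 <= C0 (L0 - e) + C1 (L1 + e)) ->
  c0 L0 <= c1 L1.
Proof.
move=> H0 H1 L00 L10 d0 H.
apply: (cmp_lim (lq H0 L00) (rq H1 L10) d0) => e e0 ed.
rewrite ler_pM2r ?invr_gt0 //.
have := H e e0 ed; lra.
Qed.

Lemma c_mono {R : realType} (C c : R -> R) a b :
  cost_ok C c -> 0 <= a -> a < b -> c a <= c b.
Proof.
move=> HC a0 ab.
have b0 : 0 < b by apply: le_lt_trans ab.
have d0 : 0 < b - a by rewrite subr_gt0.
apply: (cmp_lim (rq HC a0) (lq HC b0) d0) => e e0 ed.
rewrite ler_pM2r ?invr_gt0 //.
have [Hcv _] := HC.
set th := (b - a - e) / (b - a).
have th0 : 0 <= th by apply: divr_ge0; lra.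
have th1 : th <= 1 by rewrite ler_pdivrMr // mul1r; lra.
have E1 : a + e = th * a + (1 - th) * b.
  rewrite /th; field; lra.
have E2 : b - e = (1 - th) * a + (1 - (1 - th)) * b.
  rewrite /th; field; lra.
have c1 := Hcv a b th a0 (ltW b0) (introT andP (conj th0 th1)).
have c2 := Hcv a b (1 - th) a0 (ltW b0).
have th' : 0 <= 1 - th <= 1 by apply/andP; split; lra.
move: (c2 th') c1; rewrite -E1 -E2; lra.
Qed.
Definition shiftf {R : realType} {B S : finType} (y : S -> B -> R) (i : B) (s0 s1 : S) (e : R) : S -> B -> R :=
  fun s j => y s j + e * ((j == i)%:R * ((s == s1)%:R - (s == s0)%:R)).

Lemma sum_delta {R : realType} {T : finType} (i : T) (K : R) :
  \sum_(j : T) (j == i)%:R * K = K.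
Proof.
rewrite (bigD1 i) //= eqxx mul1r big1 ?addr0 // => j /negPf ->; by rewrite mul0r.
Qed.

Lemma load_shift {R : realType} {B S : finType} (y : S -> B -> R) i s0 s1 e s :
  load (shiftf y i s0 s1 e) s = load y s + e * ((s == s1)%:R - (s == s0)%:R).
Proof.
by rewrite /load /shiftf big_split /= -mulr_sumr sum_delta.
Qed.

Lemma demand_shift {R : realType} {B S : finType} (y : S -> B -> R) i s0 s1 e j :
  s0 != s1 -> demand (shiftf y i s0 s1 e) j = demand y j.
Proof.
move=> ne; rewrite /demand /shiftf big_split /= -mulr_sumr -mulr_sumr.
rewrite sumrB.
have -> : \sum_(i0 : S) (i0 == s1)%:R = (1 : R).
  by rewrite (eq_bigr (fun k => (k == s1)%:R * 1)) ?sum_delta // => k _; rewrite mulr1.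
have -> : \sum_(i0 : S) (i0 == s0)%:R = (1 : R).
  by rewrite (eq_bigr (fun k => (k == s0)%:R * 1)) ?sum_delta // => k _; rewrite mulr1.
by rewrite subrr mulr0 mulr0 addr0.
Qed.

Lemma shift_other {R : realType} {B S : finType} (y : S -> B -> R) i s0 s1 e s j :
  ~ (j = i /\ (s = s0 \/ s = s1)) -> shiftf y i s0 s1 e s j = y s j.
Proof.
move=> H; rewrite /shiftf.
case: (eqVneq j i) => [ji|ji]; last by rewrite mul0r mulr0 addr0.
case: (eqVneq s s0) => [ss0|ss0]; first by exfalso; apply: H; split => //; left.
case: (eqVneq s s1) => [ss1|ss1]; first by exfalso; apply: H; split => //; right.
by rewrite subrr mulr0 mulr0 addr0.
Qed.

Lemma feasible_shift {R : realType} {B S : finType} adj (T : B -> R) (y : S -> B -> R) i s0 s1 e :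
  feasible adj T y -> s0 != s1 -> 0 <= e -> e <= y s0 i -> adj i s1 ->
  feasible adj T (shiftf y i s0 s1 e).
Proof.
move=> [H0 [Ha Hd]] ne e0 ey a1; split; [|split].
- move=> s j; rewrite /shiftf.
  case: (eqVneq j i) => [->|ji]; last by rewrite mul0r mulr0 addr0.
  rewrite mul1r.
  case: (eqVneq s s0) => [->|ss0]; first by rewrite (negPf ne) /=; lra.
  have := H0 s i; case: (s == s1) => /=; lra.
- move=> s j; rewrite /shiftf.
  case: (eqVneq j i) => [->|ji]; last by rewrite mul0r mulr0 addr0; apply: Ha.
  rewrite mul1r.
  case: (eqVneq s s0) => [->|ss0].
    rewrite (negPf ne) /= => H; apply: Ha; lra.
  case: (eqVneq s s1) => [->//|ss1].
  by rewrite subrr mulr0 addr0; apply: Ha.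
- by move=> j; rewrite demand_shift.
Qed.

Lemma cost_shift {R : realType} {B S : finType} (C : S -> R -> R) (y : S -> B -> R) i s0 s1 e :
  s0 != s1 ->
  \sum_s C s (load (shiftf y i s0 s1 e) s) - \sum_s C s (load y s) =
  (C s0 (load y s0 - e) - C s0 (load y s0)) + (C s1 (load y s1 + e) - C s1 (load y s1)).
Proof.
move=> ne; rewrite -sumrB (bigD1 s0) //= (bigD1 s1) /=; last by rewrite eq_sym.
rewrite big1 ?addr0; last first.
  move=> s /andP[ns1 ns0]; rewrite load_shift (negPf ns1) (negPf ns0) subrr mulr0 addr0.
  by rewrite subrr.
rewrite !load_shift eqxx (negPf ne) eq_sym (negPf ne) eqxx.
by rewrite /= sub0r subr0 mulrN1 mulr1.
Qed.

Lemma load_ge {R : realType} {B S : finType} (y : S -> B -> R) s j :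
  (forall s j, 0 <= y s j) -> y s j <= load y s.
Proof.
by move=> H; rewrite /load (bigD1 j) //= lerDl sumr_ge0.
Qed.

Lemma load_ge0 {R : realType} {B S : finType} (y : S -> B -> R) s :
  (forall s j, 0 <= y s j) -> 0 <= load y s.
Proof. by move=> H; rewrite /load sumr_ge0. Qed.

Lemma demand_ge0 {R : realType} {B S : finType} (y : S -> B -> R) j :
  (forall s j, 0 <= y s j) -> 0 <= demand y j.
Proof. by move=> H; rewrite /demand sumr_ge0. Qed.

Lemma opt_shift {R : realType} {B S : finType} (C c : S -> R -> R) adj (T : B -> R)
    (y : S -> B -> R) i s0 s1 :
  (forall s, cost_ok (C s) (c s)) -> feasible adj T y -> s0 != s1 -> 0 < y s0 i ->
  (forall e, 0 < e -> e <= y s0 i ->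
     \sum_s C s (load y s) <= \sum_s C s (load (shiftf y i s0 s1 e) s)) ->
  c s0 (load y s0) <= c s1 (load y s1).
Proof.
move=> HC [H0 _] ne y0 H.
apply: (@shift_le _ _ _ _ _ _ _ (y s0 i)) => //.
- by apply: lt_le_trans y0 (load_ge _ _ H0).
- exact: load_ge0.
- move=> e e0 ed; have := H e e0 ed; have := cost_shift C y i e ne; lra.
Qed.

Lemma kkt_ys {R : realType} {B S : finType} adj (T : B -> R) lam (C : S -> R -> R) ys z :
  welfare_max adj T lam C ys -> feasible adj T z -> (forall j, demand z j = demand ys j) ->
  \sum_s C s (load ys s) <= \sum_s C s (load z s).
Proof.
move=> [_ W] Fz Dz; have := W z Fz; rewrite /welfare.
under eq_bigr do rewrite Dz.
by rewrite lerD2l lerN2.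
Qed.

Lemma count_lt (T : eqType) (a b : pred T) s x :
  (forall y, a y -> b y) -> x \in s -> b x -> ~~ a x -> (count a s < count b s)%N.
Proof.
move=> sub; elim: s => //= z s IH; rewrite in_cons => /orP[/eqP <-|xs] bx nax.
  rewrite bx (negPf nax) add0n add1n ltnS; exact: sub_count.
have := IH xs bx nax; case az: (a z); first by rewrite (sub _ az).
by case: (b z) => /=; rewrite ?add0n ?add1n => h //; apply: ltnW.
Qed.

Theorem lemma2 (R : realType) (B S : finType) (adj : B -> S -> bool)
    (T : B -> R) (lam : B -> R -> R) (lmax : R) (C c : S -> R -> R) (k : R)
    (ys : S -> B -> R) (fin : S -> R) (y : R -> S -> B -> R) :
  (forall i, inv_demand_ok lmax (T i) (lam i)) ->
  (forall t, cost_ok (C t) (c t)) ->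
  welfare_max adj T lam C ys ->
  1 <= k ->
  ascending_run adj T lam lmax C c k ys fin y ->
  forall (t : S) (p1 p2 : R),
    item_active (start_price c ys) fin p1 t ->
    item_active (start_price c ys) fin p2 t ->
    p1 < p2 ->
    c t (load (y p2) t) <= c t (load (y p1) t).
Proof.
move=> Hlam HC Hwm k1 Hrun.
rewrite /ascending_run /= in Hrun.
case: Hrun => Hpsfin [Hfc [Hnfc [Hfeas [Hbr [Hmc [Hin1 [Hin2 [Hcs Hcb]]]]]]]].
set ps := start_price c ys in Hpsfin Hfc Hnfc Hfeas Hbr Hmc Hin1 Hin2 Hcs Hcb *.
have Fys : feasible adj T ys by case: Hwm.
have ys_opt : forall i s0 s1, s0 != s1 -> 0 < ys s0 i -> adj i s1 -> ps s0 <= ps s1.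
  move=> i s0 s1 ne y0 a1; rewrite /ps /start_price.
  apply: (opt_shift HC Fys ne y0) => e e0 ed.
  apply: (kkt_ys Hwm); first by apply: feasible_shift => //; apply: ltW.
  by move=> j; rewrite demand_shift.
have r_opt : forall r j s0 s1, run_dom ps fin r -> item_active ps fin r s0 ->
    item_active ps fin r s1 -> buyer_active ys ps fin y r j -> s0 != s1 ->
    0 < y r s0 j -> adj j s1 -> c s0 (load (y r) s0) <= c s1 (load (y r) s1).
  move=> r j s0 s1 dr a0 a1 bj ne y0 aj.
  have Fr := Hfeas r dr.
  apply: (opt_shift HC Fr ne y0) => e e0 ed.
  apply: (Hmc r dr); first by apply: feasible_shift => //; apply: ltW.
    move=> s j' Hn; apply: shift_other => -[Ej [Es|Es]]; subst; by apply: Hn.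
  by move=> j' _; rewrite demand_shift.
have core : forall p q t, (forall s, ~~ ((p < ps s) && (ps s < q))) ->
    (forall s, ~~ ((p < fin s) && (fin s < q))) ->
    item_active ps fin p t -> item_active ps fin q t -> p < q ->
    c t (load (y q) t) <= c t (load (y p) t).
  move=> p q t NEps NEfin Ap Aq pq.
  have dom_of : forall r s, item_active ps fin r s -> run_dom ps fin r.
    by move=> r s /andP[h1 h2]; split; exists s.
  have dp := dom_of _ _ Ap; have dq := dom_of _ _ Aq.
  have Fp := Hfeas p dp; have Fq := Hfeas q dq.
  have [Fp0 [Fpa Fpd]] := Fp; have [Fq0 [Fqa Fqd]] := Fq.
  set m := fun r s => c s (load (y r) s).
  rewrite leNgt; apply/negP => Hlt.
  set inX := fun s => [&& ps s <= p, q <= fin s & m p s < m q s].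
  have inXt : inX t.
    move: Ap Aq; rewrite /inX /item_active => /andP[-> _] /andP[_ ->] /=; exact: Hlt.
  have inXL : forall s, inX s -> load (y p) s < load (y q) s.
    move=> s /and3P[_ _ lt]; rewrite ltNge; apply/negP => le.
    move: le; rewrite le_eqVlt => /orP[/eqP E|lt'].
      by move: lt; rewrite /m E ltxx.
    have := c_mono (HC s) (load_ge0 _ Fq0) lt'; rewrite -/(m q s) -/(m p s).
    by rewrite leNgt lt.
  have [i Hi] : exists i, \sum_(s | inX s) y p s i < \sum_(s | inX s) y q s i.
    case: (boolP [exists i, \sum_(s | inX s) y p s i < \sum_(s | inX s) y q s i]) => [/existsP //|/existsPn H].
    exfalso.
    have H1 : \sum_(s | inX s) load (y q) s <= \sum_(s | inX s) load (y p) s.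
      rewrite /load exchange_big [X in _ <= X]exchange_big /=.
      by apply: ler_sum => i _; rewrite leNgt H.
    have H2 : \sum_(s | inX s) load (y p) s < \sum_(s | inX s) load (y q) s.
      rewrite (bigD1 t) //= [X in _ < X](bigD1 t) //=.
      apply: ltr_leD; first exact: inXL.
      by apply: ler_sum => s /andP[Xs _]; apply: ltW (inXL s Xs).
    by move: H2; rewrite ltNge H1.
  have [s0 /andP[Xs0 Hs0]] : exists s0, inX s0 && (y p s0 i < y q s0 i).
    case: (boolP [exists s0, inX s0 && (y p s0 i < y q s0 i)]) => [/existsP //|/existsPn H].
    exfalso; move: Hi; rewrite ltNge => /negP; apply; apply: ler_sum => s Xs.
    by move: (H s); rewrite Xs /= -leNgt.
  set actB := fun r => buyer_active ys ps fin y r i.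
  have fin_prop : forall r r', r <= q -> p < r' ->
      buyer_finished fin y r i -> buyer_finished fin y r' i.
    move=> r r' rq pr' [u [fu yu]]; exists u; split => //.
    by move: (NEfin u); rewrite negb_and -!leNgt => /orP[h|h]; lra.
  have spread : forall r r', p < r < q -> p <= r' <= q -> actB r -> actB r'.
    move=> r r' /andP[pr rq] /andP[pr' r'q] [nf [u [yu pu]]]; split.
      by move=> f'; apply: nf; apply: (fin_prop r' r).
    exists u; split => //.
    by move: (NEps u); rewrite negb_and -!leNgt => /orP[h|h]; lra.
  set mid := (p + q) / 2.
  have pmid : p < mid < q by apply/andP; split; rewrite /mid; lra.
  have y0q : 0 < y q s0 i by apply: le_lt_trans (Fp0 s0 i) Hs0.
  case: (pselect (exists r, p < r < q /\ actB r)) => [[r [prq ar]]|nB1].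
  - have aBp : actB p by apply: (spread r) => //; apply/andP; split; lra.
    have aBq : actB q by apply: (spread r) => //; apply/andP; split; lra.
    have dlt : demand (y q) i < demand (y p) i.
      have := Hbr q i dq aBq; have := Hbr p i dp aBp.
      have [_ [_ [_ [Hmon _]]]] := Hlam i.
      move=> E1 E2; rewrite ltNge; apply/negP => le.
      have := Hmon _ _ (demand_ge0 i Fp0) le (Fqd i); lra.
    have [s1 /andP[nXs1 Hs1]] : exists s1, ~~ inX s1 && (y q s1 i < y p s1 i).
      case: (boolP [exists s1, ~~ inX s1 && (y q s1 i < y p s1 i)]) => [/existsP //|/existsPn H].
      exfalso; move: dlt; rewrite /demand (bigID inX) [X in _ < X](bigID inX) /=.
      apply/negP; rewrite -leNgt; apply: lerD; first exact: ltW Hi.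
      by apply: ler_sum => s nXs; move: (H s); rewrite nXs /= -leNgt.
    have [r' /andP[pr'q as1]] : exists r', (p < r' <= q) && item_active ps fin r' s1.
      case: (pselect (exists r', (p < r' <= q) && item_active ps fin r' s1)) => // nex.
      exfalso; have := Hcs p q s1 i dp dq (ltW pq).
      have H : forall r, p < r <= q -> ~ item_active ps fin r s1.
        by move=> r0 hr ha; apply: nex; exists r0; rewrite hr ha.
      by move=> /(_ H) E; move: Hs1; rewrite E ltxx.
    have ne01 : s0 != s1 by apply/eqP => E; move: nXs1; rewrite -E Xs0.
    have y1p : 0 < y p s1 i by apply: le_lt_trans (Fq0 s1 i) Hs1.
    move: as1 => /andP[ps1 fs1].
    have [hps|hps] := leP (ps s1) p.
    + have fq1 : q <= fin s1.
        by move: (NEfin s1); rewrite negb_and -!leNgt => /orP[h|h]; lra.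
      have Xs0' := Xs0; move/and3P: Xs0' => [a0 b0 c3].
      have As0p : item_active ps fin p s0 by apply/andP; split; lra.
      have As0q : item_active ps fin q s0 by apply/andP; split; lra.
      have As1p : item_active ps fin p s1 by apply/andP; split; lra.
      have As1q : item_active ps fin q s1 by apply/andP; split; lra.
      have m1 : m q s1 <= m p s1 by move: nXs1; rewrite /inX hps fq1 /= -leNgt.
      have c1 := r_opt q i s0 s1 dq As0q As1q aBq ne01 y0q (Fpa _ _ y1p).
      have c2 := r_opt p i s1 s0 dp As1p As0p aBp _ y1p (Fqa _ _ y0q).
      rewrite eq_sym ne01 in c2; have c2' := c2 isT.
      rewrite /m in m1 c3; lra.
    + have ys1 : y p s1 i = ys s1 i := Hin1 p s1 i dp hps.
      move: aBp => [_ [u [yu pu]]].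
      have neu : s1 != u by apply/eqP => E; move: hps; rewrite E ltNge pu.
      have y1 : 0 < ys s1 i by rewrite -ys1.
      have := ys_opt i s1 u neu y1 (Fys.2.1 _ _ yu); lra.
  - case: (pselect (actB q)) => [aBq|naBq].
    + have naBp : ~ actB p.
        move=> [nf [u [yu pu]]]; apply: nB1; exists mid; split => //; split.
          move=> f; apply: aBq.1; apply: (fin_prop mid q) => //; lra.
        by exists u; split => //; lra.
      have nfp : ~ buyer_finished fin y p i.
        by move=> f; apply: aBq.1; apply: (fin_prop p q) => //; apply: ltW.
      have ys0 := Hin2 p s0 i dp naBp nfp.
      move: (aBq) => [nfq [u [yu pu]]].
      have hpu : p < ps u.
        rewrite ltNge; apply/negP => h; apply: nB1; exists mid; split => //; split.
          move=> f; apply: nfq; apply: (fin_prop mid q) => //; lra.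
        by exists u; split => //; lra.
      move: Xs0 => /and3P[a0 _ _].
      have neu : u != s0 by apply/eqP => E; move: hpu; rewrite E ltNge a0.
      have := ys_opt i u s0 neu yu (Fqa _ _ y0q); lra.
    + have H : forall r, p < r <= q -> ~ actB r.
        move=> r /andP[pr]; rewrite le_eqVlt => /orP[/eqP Er|rlt] ar.
          by apply: naBq; rewrite -Er.
        by apply: nB1; exists r; split => //; apply/andP; split.
      have := Hcb p q s0 i dp dq (ltW pq) H.
      by move=> E; move: Hs0; rewrite E ltxx.
set E := [seq ps s | s <- enum S] ++ [seq fin s | s <- enum S].
have psE : forall s, ps s \in E by move=> s; rewrite mem_cat map_f ?mem_enum.
have finE : forall s, fin s \in E.
  by move=> s; rewrite mem_cat orbC map_f ?mem_enum.
suff main : forall (n : nat) (p q : R) (t : S), (count (fun e : R => ((p < e) && (e < q))%R) E <= n)%N ->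
    item_active ps fin p t -> item_active ps fin q t -> p < q ->
    c t (load (y q) t) <= c t (load (y p) t).
  by move=> t p1 p2 A1 A2 lt; apply: (main _ _ _ _ (leqnn _) A1 A2 lt).
elim=> [|n IH] p q t Hn Ap Aq pq.
  apply: core => // s; apply/negP => h.
    by move: Hn; rewrite leqn0 => /eqP Hn; move: (has_count (fun e : R => ((p < e) && (e < q))%R) E); rewrite Hn ltnn => /hasP; apply; exists (ps s).
  by move: Hn; rewrite leqn0 => /eqP Hn; move: (has_count (fun e : R => ((p < e) && (e < q))%R) E); rewrite Hn ltnn => /hasP; apply; exists (fin s).
case: (boolP (has (fun e => (p < e) && (e < q)) E)) => [/hasP [e eE /andP[pe eq]]|nh];
  last first.
  apply: core => // s; apply/negP => h; move/negP: nh; apply; apply/hasP.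
    by exists (ps s).
  by exists (fin s).
have Ae : item_active ps fin e t.
  move: Ap Aq; rewrite /item_active => /andP[a1 a2] /andP[a3 a4].
  by apply/andP; split; [apply: le_trans a1 (ltW pe)|apply: le_trans (ltW eq) a4].
apply: (@le_trans _ _ (c t (load (y e) t))).
  apply: (IH e q t) => //; rewrite -ltnS; apply: leq_trans Hn.
  apply: (count_lt (x := e)) => //.
  - by move=> x /andP[h1 h2]; rewrite h2 (lt_trans pe h1).
  - by rewrite pe eq.
  - by rewrite ltxx.
apply: (IH p e t) => //; rewrite -ltnS; apply: leq_trans Hn.
apply: (count_lt (x := e)) => //.
- by move=> x /andP[h1 h2]; rewrite h1 (lt_trans h2 eq).
- by rewrite pe eq.
- by rewrite ltxx andbF.
Qed.
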